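(* Let \(A\) be a geometrically fast set of positive bumps with a fixed marking witnessing this. If \(s\neq t\) are points of \(I\) both having trivial history, then the orbits \(s\langle A\rangle\) and \(t\langle A\rangle\) are disjoint.
   Context: \(I=[0,1]\); homeomorphisms act on the right. A positive bump is an element of \(\operatorname{Homeo}_+(I)\) whose support \(\{t:ta\neq t\}\) is a single open interval \((x,y)\) on which \(ta>t\); \(x\), \(y\) are its left and right transition points. \(A\) is geometrically proper if no point is a left transition point of two distinct elements, nor a right transition point of two distinct elements. A marking assigns each \(a\in A\) a marker \(t\in\operatorname{supt}(a)\); for \(a\) with support \((x,y)\), \(\operatorname{src}(a)=(x,t)\), \(\operatorname{dest}(a)=[ta,y)\), \(\operatorname{dest}(a^{-1})=\operatorname{src}(a)\). \(A\) is geometrically fast if geometrically proper and the marking makes all these intervals pairwise disjoint. A point \(t\in I\) has trivial history if \(t\notin\operatorname{dest}(a)\) for every \(a\in A\cup A^{-1}\). \(s\langle A\rangle=\{sg: g\in\langle A\rangle\}\). *)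

(* Defs.v *)
From Stdlib Require Import Reals Relations.
Open Scope R_scope.

Definition inI (t : R) : Prop := 0 <= t <= 1.

(* A map R -> R is used as a representative of a self-map of I; only its
   values on I matter.  Homeomorphisms act on the right: "t a" is [a t]. *)
Definition homeo_plus (a : R -> R) : Prop :=
  (forall t, inI t -> inI (a t)) /\
  (forall s t, inI s -> inI t -> s < t -> a s < a t) /\
  (forall u, inI u -> exists t, inI t /\ a t = u) /\
  (forall t, inI t -> forall eps, 0 < eps -> exists delta, 0 < delta /\
     forall u, inI u -> Rabs (u - t) < delta -> Rabs (a u - a t) < eps).

Definition same_homeo (a b : R -> R) : Prop := forall t, inI t -> a t = b t.

Definition is_bump (a : R -> R) (x y : R) : Prop :=
  homeo_plus a /\ 0 <= x /\ x < y /\ y <= 1 /\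
  (forall t, inI t -> (a t <> t <-> x < t < y)) /\
  (forall t, x < t < y -> a t > t).

Definition positive_bump (a : R -> R) : Prop := exists x y, is_bump a x y.

Definition geom_proper (A : (R -> R) -> Prop) : Prop :=
  forall a b x y x' y', A a -> A b -> is_bump a x y -> is_bump b x' y' ->
    (x = x' \/ y = y') -> same_homeo a b.

Definition is_marking (A : (R -> R) -> Prop) (m : (R -> R) -> R) : Prop :=
  forall a, A a -> exists x y, is_bump a x y /\ x < m a < y.

(* src(a) = (x, m a) ; dest(a) = [ (m a) a, y ) ; dest(a^-1) = src(a). *)
Definition in_src (m : (R -> R) -> R) (a : R -> R) (t : R) : Prop :=
  exists x y, is_bump a x y /\ x < t < m a.
Definition in_dest (m : (R -> R) -> R) (a : R -> R) (t : R) : Prop :=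
  exists x y, is_bump a x y /\ a (m a) <= t < y.

Definition geom_fast_marking (A : (R -> R) -> Prop) (m : (R -> R) -> R) : Prop :=
  geom_proper A /\ is_marking A m /\
  (forall a t, A a -> ~ (in_src m a t /\ in_dest m a t)) /\
  (forall a b t, A a -> A b -> ~ same_homeo a b ->
     ~ (in_src m a t /\ in_src m b t) /\ ~ (in_src m a t /\ in_dest m b t) /\
     ~ (in_dest m a t /\ in_src m b t) /\ ~ (in_dest m a t /\ in_dest m b t)).

(* t has trivial history: t is in no dest(a), a in A ∪ A^-1. *)
Definition trivial_history (A : (R -> R) -> Prop) (m : (R -> R) -> R) (t : R) : Prop :=
  inI t /\ forall a, A a -> ~ in_dest m a t /\ ~ in_src m a t.

Definition orbit_step (A : (R -> R) -> Prop) (u v : R) : Prop :=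
  inI u /\ inI v /\ exists a, A a /\ (v = a u \/ u = a v).

(* v in u<A> : v = u g for some g in the group generated by A. *)
Definition in_orbit (A : (R -> R) -> Prop) (u v : R) : Prop :=
  inI u /\ clos_refl_trans R (orbit_step A) u v.

(* Main.v *)
Require Import Defs.
From Stdlib Require Import Reals Relations Lra.
From Stdlib Require Import Classical ClassicalEpsilon FunctionalExtensionality PropExtensionality.
Open Scope R_scope.

Section S.
Variable A : (R -> R) -> Prop.
Variable m : (R -> R) -> R.

Definition rep (a : R -> R) : R -> R :=
  epsilon (inhabits (fun x : R => x)) (fun c => A c /\ same_homeo a c).

Lemma rep_spec a : A a -> A (rep a) /\ same_homeo a (rep a).
Proof.
  intro Ha. unfold rep. apply epsilon_spec. exists a. split; [exact Ha|]. intros t _; reflexivity.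
Qed.

Lemma rep_eq a b : same_homeo a b -> rep a = rep b.
Proof.
  intro H. unfold rep. f_equal. apply functional_extensionality. intro c.
  apply propositional_extensionality. split; intros [H1 H2]; split; auto;
  intros t Ht; rewrite <- H2 by exact Ht; [rewrite H| rewrite <- H]; auto.
Qed.

Definition peel (u w : R) : Prop :=
  inI w /\ exists a, A a /\ rep a = a /\
    ((in_dest m a u /\ u = a w) \/ (in_src m a u /\ w = a u)).

Lemma bump_mono b x y s t : is_bump b x y -> inI s -> inI t -> s < t -> b s < b t.
Proof. intros [[_ [H _]] _] ?? ?. auto. Qed.

Lemma bump_fix b x y t : is_bump b x y -> inI t -> ~ (x < t < y) -> b t = t.
Proof.
  intros Hb Ht Hn. destruct (Req_dec (b t) t) as [E|E]; auto.
  destruct Hb as (_&_&_&_&H&_). exfalso. apply Hn. apply (proj1 (H t Ht)). exact E.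
Qed.

Lemma bump_inj b x y s t : is_bump b x y -> inI s -> inI t -> b s = b t -> s = t.
Proof.
  intros Hb Hs Ht E. destruct (Rtotal_order s t) as [L|[L|L]]; auto.
  - pose proof (bump_mono _ _ _ _ _ Hb Hs Ht L). lra.
  - pose proof (bump_mono _ _ _ _ _ Hb Ht Hs L). lra.
Qed.

Hypothesis GF : geom_fast_marking A m.

Lemma peel_det u w1 w2 : peel u w1 -> peel u w2 -> w1 = w2.
Proof.
  destruct GF as (GP & MK & D1 & D2).
  intros (Hw1 & a & Ha & Ra & Ca) (Hw2 & b & Hb & Rb & Cb).
  destruct (classic (same_homeo a b)) as [S|S].
  - assert (a = b) by (rewrite <- Ra, <- Rb; apply rep_eq; auto). subst b.
    destruct Ca as [[Da Ea]|[Sa Ea]]; destruct Cb as [[Db Eb]|[Sb Eb]].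
    + destruct (MK a Ha) as (x&y&Bx&_). apply (bump_inj a x y); auto. congruence.
    + exfalso; apply (D1 a u Ha); auto.
    + exfalso; apply (D1 a u Ha); auto.
    + congruence.
  - exfalso. destruct (D2 a b u Ha Hb S) as (N1&N2&N3&N4).
    destruct Ca as [[Da Ea]|[Sa Ea]]; destruct Cb as [[Db Eb]|[Sb Eb]]; tauto.
Qed.

Lemma uniq_end u s t : clos_refl_trans R peel u s -> clos_refl_trans R peel u t ->
  (forall w, ~ peel s w) -> (forall w, ~ peel t w) -> s = t.
Proof.
  intros H1 H2 Ts Tt. apply clos_rt_rt1n in H1. apply clos_rt_rt1n in H2.
  revert t H2 Tt. induction H1 as [u|u w s P Q IH]; intros t H2 Tt.
  - destruct H2 as [|w' t' P' Q']; auto. exfalso; eapply Ts; eauto.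
  - destruct H2 as [|w' t' P' Q'].
    + exfalso; eapply Tt; eauto.
    + apply IH; auto. rewrite (peel_det _ _ _ P P'); auto.
Qed.

Lemma step_back u v s : peel u v -> clos_refl_trans R peel u s ->
  (forall w, ~ peel s w) -> clos_refl_trans R peel v s.
Proof.
  intros P H Ts. apply clos_rt_rt1n in H. destruct H as [|w t' P' Q'].
  - exfalso; eapply Ts; eauto.
  - rewrite (peel_det _ _ _ P P'). apply clos_rt1n_rt; auto.
Qed.

Lemma inv_step u v s : orbit_step A u v -> clos_refl_trans R peel u s ->
  (forall w, ~ peel s w) -> clos_refl_trans R peel v s.
Proof.
  intros (Hu & Hv & a & Ha & E) C Ts.
  destruct (rep_spec a Ha) as [Hb Sab]. set (b := rep a) in *.
  assert (Rb : rep b = b) by (symmetry; apply rep_eq; auto).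
  destruct GF as (GP & MK & D1 & D2).
  destruct (MK b Hb) as (x & y & Bb & Lm & Rm).
  pose proof Bb as (_ & Hx & Hxy & Hy & _).
  assert (Iy : inI y) by (unfold inI; lra).
  assert (Im : inI (m b)) by (unfold inI; lra).
  assert (Fy : b y = y) by (apply (bump_fix b x y); auto; lra).
  destruct E as [E|E].
  - rewrite (Sab u Hu) in E.
    destruct (classic (x < u < y)) as [Iu|Nu].
    + destruct (Rlt_or_le u (m b)) as [L|L].
      * apply (step_back u); auto. split; auto. exists b; repeat split; auto.
        right; split; auto. exists x, y; split; auto; lra.
      * apply rt_trans with u; auto. apply rt_step. split; auto. exists b; repeat split; auto.
        left; split; auto. exists x, y; split; auto. subst v.
        split.
        -- destruct L as [L|L]; [left; apply (bump_mono b x y); auto | right; congruence].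
        -- rewrite <- Fy. apply (bump_mono b x y); auto; lra.
    + rewrite (bump_fix b x y u Bb Hu Nu) in E. subst; auto.
  - rewrite (Sab v Hv) in E.
    destruct (classic (x < v < y)) as [Iv|Nv].
    + destruct (Rlt_or_le v (m b)) as [L|L].
      * apply rt_trans with u; auto. apply rt_step. split; auto. exists b; repeat split; auto.
        right; split; auto. exists x, y; split; auto; lra.
      * apply (step_back u); auto. split; auto. exists b; repeat split; auto.
        left; split; auto. exists x, y; split; auto. subst u.
        split.
        -- destruct L as [L|L]; [left; apply (bump_mono b x y); auto | right; congruence].
        -- rewrite <- Fy. apply (bump_mono b x y); auto; lra.
    + rewrite (bump_fix b x y v Bb Hv Nv) in E. subst; auto.
Qed.

Lemma inv_orbit s u : clos_refl_trans R (orbit_step A) s u ->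
  (forall w, ~ peel s w) -> clos_refl_trans R peel u s.
Proof.
  intros H Ts. apply clos_rt_rt1n in H.
  assert (G : forall x y, clos_refl_trans_n1 R (orbit_step A) x y ->
            clos_refl_trans R peel x s -> clos_refl_trans R peel y s).
  { intros x0 y0 Hn. induction Hn as [|y1 z Hs Hn IH]; intros Hc; auto.
    apply (inv_step y1); auto. }
  apply (G s u); [apply clos_rt_rtn1; apply clos_rt1n_rt; auto | apply rt_refl].
Qed.

Lemma triv_term s : trivial_history A m s -> forall w, ~ peel s w.
Proof.
  intros [_ T] w (_ & a & Ha & _ & C). destruct (T a Ha). tauto.
Qed.

End S.

Theorem lemma5p6 (A : (R -> R) -> Prop) (m : (R -> R) -> R) (s t : R) :
  (forall a, A a -> positive_bump a) ->
  geom_fast_marking A m ->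
  s <> t -> trivial_history A m s -> trivial_history A m t ->
  ~ (exists u, in_orbit A s u /\ in_orbit A t u).
Proof.
  intros _ GF Nst Hs Ht [u [[_ Os] [_ Ot]]].
  apply Nst. apply (uniq_end A m GF u s t).
  - apply inv_orbit; auto. apply triv_term; auto.
  - apply inv_orbit; auto. apply triv_term; auto.
  - apply triv_term; auto.
  - apply triv_term; auto.
Qed.
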